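(* Every surjective $\boxplus$-morphism $\phi:[1]^m\to[1]^n$ has a section in $\boxplus$, i.e. there is a $\boxplus$-morphism $s:[1]^n\to[1]^m$ with $\phi\circ s$ the identity.
   Context: $[1]=\{0<1\}$, $[1]^n$ the product poset ($[1]^0=[0]$). An interval in a poset is a non-empty subset $[x,z]=\{y:x\leq y\leq z\}$. $\boxplus$ is the category whose objects are the $[1]^n$ ($n\geq0$) and whose morphisms are the monotone functions mapping every interval onto an interval. *)

(* Defs.v *)
From mathcomp Require Import all_boot.
Set Implicit Arguments. Unset Strict Implicit. Unset Printing Implicit Defensive.

(* [1]^n : the product poset of n copies of [1] = {0<1}, encoded as
   boolean vectors indexed by 'I_n (false = 0, true = 1). [1]^0 = [0]. *)
Definition cube (n : nat) := {ffun 'I_n -> bool}.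

Definition cube_le (n : nat) (x y : cube n) : bool := [forall i, x i ==> y i].

Definition cube_interval (n : nat) (x z : cube n) : {set cube n} :=
  [set y | cube_le x y && cube_le y z].

Definition monotone_cube (m n : nat) (f : cube m -> cube n) : Prop :=
  forall x y, cube_le x y -> cube_le (f x) (f y).

(* morphisms of the category boxplus: monotone maps sending every interval
   onto an interval *)
Definition box_morphism (m n : nat) (f : cube m -> cube n) : Prop :=
  monotone_cube f /\
  forall x z : cube m, cube_le x z ->
    exists a b : cube n, cube_le a b /\ f @: cube_interval x z = cube_interval a b.

(* Main.v *)
Require Import Defs.
From mathcomp Require Import all_boot.
Set Implicit Arguments. Unset Strict Implicit. Unset Printing Implicit Defensive.

Lemma cube_leP n (x y : cube n) : reflect (forall i, x i -> y i) (cube_le x y).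
Proof.
apply: (iffP forallP) => H i; first exact: (implyP (H i)).
by apply/implyP; apply: H.
Qed.

Lemma cube_le_refl n (x : cube n) : cube_le x x.
Proof. by apply/cube_leP. Qed.

Lemma cube_le_anti n (x y : cube n) : cube_le x y -> cube_le y x -> x = y.
Proof.
move=> /cube_leP H1 /cube_leP H2; apply/ffunP => i.
by apply/idP/idP; [apply: H1 | apply: H2].
Qed.

Lemma image_onto m n (f : cube m -> cube n) (x z : cube m) (v : cube n) :
  box_morphism f -> cube_le x z -> cube_le (f x) v -> cube_le v (f z) ->
  exists w, [/\ cube_le x w, cube_le w z & f w = v].
Proof.
move=> [mono Hint] Hxz H1 H2.
have [a [b [Hab Heq]]] := Hint x z Hxz.
have Hx : f x \in cube_interval a b.
  by rewrite -Heq; apply: imset_f; rewrite inE cube_le_refl Hxz.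
have Hz : f z \in cube_interval a b.
  by rewrite -Heq; apply: imset_f; rewrite inE cube_le_refl Hxz.
have Ha : a \in f @: cube_interval x z by rewrite Heq inE cube_le_refl Hab.
have Hb : b \in f @: cube_interval x z by rewrite Heq inE cube_le_refl Hab.
move: Hx Hz; rewrite !inE => /andP [Hax _] /andP [_ Hzb].
case/imsetP: Ha => wa; rewrite inE => /andP [Hxa _] Ea.
case/imsetP: Hb => wb; rewrite inE => /andP [_ Hbz] Eb.
have Ea' : a = f x by apply: cube_le_anti => //; rewrite Ea; apply: mono.
have Eb' : b = f z by apply: cube_le_anti => //; rewrite Eb; apply: mono.
have : v \in f @: cube_interval x z by rewrite Heq inE Ea' Eb' H1 H2.
case/imsetP => w; rewrite inE => /andP [Hxw Hwz] ->.
by exists w.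
Qed.

Definition sec m n (x : cube m) (sg : 'I_n -> 'I_m) (y : cube n) : cube m :=
  [ffun i => x i || [exists j, (sg j == i) && y j]].

Lemma sec_sg m n (x : cube m) (sg : 'I_n -> 'I_m) y j :
  injective sg -> ~~ x (sg j) -> sec x sg y (sg j) = y j.
Proof.
move=> inj xf; rewrite ffunE (negbTE xf) /=.
apply/existsP/idP => [[k /andP [/eqP /inj -> //]] | yj].
by exists j; rewrite eqxx.
Qed.

Lemma sec_recon m n (x : cube m) (sg : 'I_n -> 'I_m) (y : cube n) (w : cube m) :
  injective sg -> (forall j, ~~ x (sg j)) ->
  cube_le x w -> cube_le w (sec x sg y) -> w = sec x sg [ffun j => w (sg j)].
Proof.
move=> inj xf /cube_leP H1 /cube_leP H2; apply/ffunP => i.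
case: (pickP [pred j | sg j == i]) => [j /eqP <- | none].
  by rewrite sec_sg // ffunE.
have E : forall y', sec x sg y' i = x i.
  move=> y'; rewrite ffunE; case: (x i) => //=.
  by apply/existsP => [[j /andP [Hj _]]]; have := none j; rewrite /= Hj.
rewrite E; apply/idP/idP => [/H2 | /H1 //]; by rewrite E.
Qed.

Lemma le_unit n (v : cube n) j :
  cube_le v [ffun t => t == j] -> v = [ffun _ => false] \/ v = [ffun t => t == j].
Proof.
move=> /cube_leP H.
case vj: (v j); [right | left]; apply/ffunP => t; rewrite ffunE.
  case: (eqVneq t j) => [-> // | ne]; apply/negbTE/negP => /H; rewrite ffunE.
  by rewrite (negbTE ne).
apply/negbTE/negP => /[dup] /H; rewrite ffunE => /eqP ->; by rewrite vj.
Qed.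

Theorem mainTheorem10 (m n : nat) (phi : cube m -> cube n) :
  box_morphism phi ->
  (forall y : cube n, exists x : cube m, phi x = y) ->
  exists s : cube n -> cube m, box_morphism s /\ (forall y : cube n, phi (s y) = y).
Proof.
move=> Hphi Hsurj.
have [mono Hint] := Hphi.
pose z0 : cube n := [ffun _ => false].
have [v0 Hv0] := Hsurj z0.
case: (@arg_maxnP (cube m) v0 (fun v => phi v == z0) (fun v => #|[pred i | v i]|)).
  by apply/eqP.
move=> x /eqP Hx Hmax.
pose e (j : 'I_n) : cube n := [ffun t => t == j].
pose up (i : 'I_m) : cube m := [ffun t => x t || (t == i)].
pose one m' : cube m' := [ffun _ => true].
have le_one : forall m' (v : cube m'), cube_le v (one m').
  by move=> m' v; apply/cube_leP => i; rewrite ffunE.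
have le_z0 : forall (v : cube n), cube_le z0 v.
  by move=> v; apply/cube_leP => i; rewrite ffunE.
have Hone : phi (one m) = one n.
  have [v Hv] := Hsurj (one n).
  by apply: cube_le_anti; [apply: le_one | rewrite -Hv; apply: mono].
have Hsig : forall j, exists i, ~~ x i /\ phi (up i) = e j.
  move=> j.
  have A1 : cube_le (phi x) (e j) by rewrite Hx.
  have A2 : cube_le (e j) (phi (one m)) by rewrite Hone; apply: le_one.
  have [w [Hxw _ Hwj]] := image_onto Hphi (le_one m x) A1 A2.
  case: (pickP [pred i | w i && ~~ x i]) => [i /andP [wi xi] | none].
    exists i; split => //.
    have Hle : cube_le (phi (up i)) (e j).
      rewrite -Hwj; apply: mono; apply/cube_leP => t; rewrite ffunE.
      case/orP => [/(cube_leP _ _ Hxw) // | /eqP -> //].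
    case: (le_unit Hle) => // E.
    have := Hmax (up i); rewrite E eqxx => /(_ isT).
    have : [pred t | x t] \proper [pred t | up i t].
      apply/properP; split.
        by apply/subsetP => t; rewrite !inE /up ffunE => ->.
      by exists i; rewrite ?inE /up ?ffunE ?eqxx ?orbT.
    by move=> /proper_card H1 H2; have := leq_trans H1 H2; rewrite ltnn.
  have : w = x.
    apply: cube_le_anti => //; apply/cube_leP => t wt.
    by have := none t; rewrite /= wt /= => /negbFE.
  move=> Ewx; move: Hwj; rewrite Ewx Hx => /ffunP /(_ j).
  by rewrite !ffunE eqxx.
have [sg Hsg] := fin_all_exists Hsig.
have xf : forall j, ~~ x (sg j) by move=> j; case: (Hsg j).
have inj : injective sg.
  move=> j k E; have := (Hsg j).2; rewrite E (Hsg k).2 => /ffunP /(_ j).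
  rewrite /e !ffunE eqxx; by move=> /eqP.
pose s := sec x sg.
have s_mono : forall y y', cube_le y y' -> cube_le (s y) (s y').
  move=> y y' /cube_leP H; apply/cube_leP => i; rewrite !ffunE.
  case/orP => [-> // | /existsP [j /andP [Hj yj]]].
  by apply/orP; right; apply/existsP; exists j; rewrite Hj H.
have x_le_s : forall y, cube_le x (s y).
  by move=> y; apply/cube_leP => i; rewrite ffunE => ->.
have step : forall y : cube n, (forall T : cube n, #|[pred j | T j]| < #|[pred j | y j]| ->
    phi (s T) = T) -> phi (s y) = y.
  move=> y IH.
  have Hge : cube_le y (phi (s y)).
    apply/cube_leP => j yj.
    have : cube_le (phi (up (sg j))) (phi (s y)).
      apply: mono; apply/cube_leP => i; rewrite ffunE.
      case/orP => [/(cube_leP _ _ (x_le_s y)) // | /eqP ->].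
      by rewrite /s sec_sg.
    rewrite (Hsg j).2 => /cube_leP; apply; by rewrite ffunE eqxx.
  apply: cube_le_anti => //; apply/cube_leP => k Hk.
  apply/negPn/negP => ynk.
  have A1 : cube_le (phi x) (e k) by rewrite Hx.
  have A2 : cube_le (e k) (phi (s y)) by apply/cube_leP => t; rewrite ffunE => /eqP ->.
  have [w [Hxw Hws Hwk]] := image_onto Hphi (x_le_s y) A1 A2.
  have HwT := sec_recon inj xf Hxw Hws.
  set T : cube n := [ffun j => w (sg j)] in HwT.
  have HTy : cube_le T y.
    apply/cube_leP => j; rewrite ffunE => /(cube_leP _ _ Hws).
    by rewrite sec_sg.
  case: (eqVneq T y) => [ETy | NTy].
    have Ey : y = z0.
      apply/ffunP => j; rewrite ffunE; apply/negbTE/negP => yj.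
      have := cube_leP _ _ Hge j yj.
      rewrite -ETy /s -HwT Hwk ffunE => /eqP Ejk; by rewrite -Ejk yj in ynk.
    have Esx : s y = x.
      apply/ffunP => i; rewrite ffunE Ey; case: (x i) => //=.
      by apply/existsP => [[j]]; rewrite ffunE andbF.
    by move: Hk; rewrite Esx Hx ffunE.
  have HTp : #|[pred j | T j]| < #|[pred j | y j]|.
    apply: proper_card; apply/properP; split.
      by apply/subsetP => j; rewrite !inE => /(cube_leP _ _ HTy).
    case: (pickP [pred j | y j && ~~ T j]) => [j /andP [yj Tj] | none].
      by exists j; rewrite !inE.
    case/eqP: NTy; apply: cube_le_anti => //; apply/cube_leP => j yj.
    by have := none j; rewrite /= yj /= => /negbFE.
  have := IH T HTp; rewrite /s -HwT Hwk => ETk.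
  have : T k by rewrite -ETk /e ffunE eqxx.
  by move/(cube_leP _ _ HTy); rewrite (negbTE ynk).
have main : forall N (y : cube n), #|[pred j | y j]| <= N -> phi (s y) = y.
  elim=> [|N IHN] y Hy; apply: step => T HT.
    by have := leq_trans HT Hy.
  by apply: IHN; rewrite -ltnS; apply: leq_trans HT Hy.
exists s; split; last by move=> y; apply: (main _ y (leqnn _)).
split; first exact: s_mono.
move=> y y' Hyy; exists (s y), (s y'); split; first exact: s_mono.
apply/setP => w; rewrite inE; apply/imsetP/andP.
  case=> T; rewrite inE => /andP [H1 H2] ->; split; exact: s_mono.
case=> H1 H2.
have Hxw : cube_le x w.
  apply/cube_leP => i xi; apply: (cube_leP _ _ H1); exact: (cube_leP _ _ (x_le_s y)).
have HwT := sec_recon inj xf Hxw H2.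
exists [ffun j => w (sg j)] => //.
rewrite inE; apply/andP; split; apply/cube_leP => j; rewrite ffunE.
  by move=> yj; apply: (cube_leP _ _ H1); rewrite /s sec_sg.
by move=> /(cube_leP _ _ H2); rewrite /s sec_sg.
Qed.
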